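(* There are deterministic distributed dynamic data structures for $4$-cycle listing and for $5$-cycle listing which handle edge insertions and deletions in $O(1)$ amortized rounds.
   Context: Highly dynamic network model: a synchronous network on a fixed set $V$ of $n$ nodes with unique identifiers starts as the empty graph; at the beginning of round $i$ the graph is $G_i=(V,E_i)$, obtained from the previous graph by an adversary inserting and/or deleting an arbitrary (unbounded) set of edges. At the start of each round every node is notified only of the insertions/deletions of edges incident to it; then each node may send a message of $O(\log n)$ bits to each of its current neighbors. A distributed dynamic data structure consists of a local part $DS_v$ at each node $v$; at the end of every round, $DS_v$ may be queried and must answer immediately, without any further communication, with $\texttt{true}$, $\texttt{false}$ or $\texttt{inconsistent}$. The amortized round complexity is at most $c$ if for every round $i$, the number of rounds up to round $i$ in which at least one node $v$ has $DS_v$ in an inconsistent state, divided by the total number of topology changes that occurred up to round $i$, is at most $c$. $k$-cycle listing ($k\in\{4,5\}$): in round $i$, $DS_v$ at each node $v$ responds to queries of the form $H=\{v,u_1,\ldots,u_{k-1}\}$ (a cyclically ordered set of $k$ nodes containing $v$) with $\texttt{true}$, $\texttt{false}$ or $\texttt{inconsistent}$, such that if all nodes of $H$ are queried with $H$, then either at least one node responds $\texttt{inconsistent}$, or at least one node responds $\texttt{true}$ if and only if $H$ is a $k$-cycle in $G_{i-1}$. *)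

(* Defs.v *)
From mathcomp Require Import all_boot.
Set Implicit Arguments. Unset Strict Implicit. Unset Printing Implicit Defensive.

Inductive answer := Ans_true | Ans_false | Ans_incons.

Definition is_incons (a : answer) : bool := if a is Ans_incons then true else false.
Definition is_yes (a : answer) : bool := if a is Ans_true then true else false.

(* Nodes are 'I_n (unique identifiers; n is known to the
   nodes).  The local part DS_v is the (unbounded) local state of type st n.
   In each round a node v
   - is notified of the changes of its incident edges: the finite function
     maps u to [Some b] if the edge vu changed in this round and is now
     present (b = true, insertion) / absent (b = false, deletion), and to
     [None] otherwise  (st_notify);
   - sends a (possibly empty) message st_send ... u to every node u; only
     messages to current neighbours are delivered;
   - updates its state with the messages received from its current
     neighbours, indexed by sender (st_recv);
   - must then answer any query immediately from its local state, without
     communication (st_query). *)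
Record dyn_alg : Type := DynAlg {
  st : nat -> Type;
  st_init : forall n, 'I_n -> st n;
  st_notify : forall n, 'I_n -> st n -> {ffun 'I_n -> option bool} -> st n;
  st_send : forall n, 'I_n -> st n -> 'I_n -> option nat;
  st_recv : forall n, 'I_n -> st n -> ('I_n -> option nat) -> st n;
  st_query : forall n, 'I_n -> st n -> seq 'I_n -> answer }.

(* Messages of O(log n) bits: message values are < (n+2)^B for a constant B. *)
Definition small_messages (A : dyn_alg) : Prop :=
  exists B : nat, forall n (v : 'I_n) (s : st A n) (u : 'I_n) (m : nat),
    @st_send A n v s u = Some m -> m < (n.+2) ^ B.

(* A dynamic graph sequence on V = 'I_n: G i is the (simple, undirected)
   graph G_i of round i; G_0 is the empty graph; between consecutive rounds
   the adversary may change an arbitrary set of edges. *)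
Definition dyn_graph_seq n (G : nat -> rel 'I_n) : Prop :=
  (forall i u v, G i u v = G i v u) /\
  (forall i v, ~~ G i v v) /\
  (forall u v, ~~ G 0 u v).

Definition changes n (G : nat -> rel 'I_n) (i : nat) (v : 'I_n)
  : {ffun 'I_n -> option bool} :=
  [ffun u => if G i v u != G i.-1 v u then Some (G i v u) else None].

(* Local states of all nodes at the end of round i (round 0 = initial). *)
Fixpoint run (A : dyn_alg) n (G : nat -> rel 'I_n) (i : nat) : forall v : 'I_n, st A n :=
  match i with
  | 0 => @st_init A n
  | j.+1 =>
      let s := run A G j in
      let s' := fun v => @st_notify A n v (s v) (changes G j.+1 v) in
      fun v => @st_recv A n v (s' v)
                 (fun u => if G j.+1 u v then @st_send A n u (s' u) v else None)
  end.

Definition resp (A : dyn_alg) n (G : nat -> rel 'I_n) (i : nat) (v : 'I_n)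
  (H : seq 'I_n) : answer := @st_query A n v (run A G i v) H.

(* A query to v: a cyclically ordered set of k distinct nodes containing v. *)
Definition valid_query k n (v : 'I_n) (H : seq 'I_n) : bool :=
  [&& size H == k, uniq H & v \in H].

Definition is_kcycle k n (g : rel 'I_n) (H : seq 'I_n) : Prop :=
  [/\ size H = k, uniq H & cycle g H].

(* k-cycle listing correctness in round i >= 1 (answers w.r.t. G_{i-1}). *)
Definition listing_correct (k : nat) (A : dyn_alg) : Prop :=
  forall n (G : nat -> rel 'I_n), dyn_graph_seq G ->
  forall (i : nat) (H : seq 'I_n), size H = k -> uniq H ->
    (exists2 v, v \in H & is_incons (resp A G i.+1 v H)) \/
    ((exists2 v, v \in H & is_yes (resp A G i.+1 v H)) <-> is_kcycle k (G i) H).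

Definition round_inconsistent (A : dyn_alg) k n (G : nat -> rel 'I_n) (i : nat) : bool :=
  [exists v : 'I_n, [exists H : k.-tuple 'I_n,
     valid_query k v H && is_incons (resp A G i v H)]].

Definition nchanges n (G : nat -> rel 'I_n) (i : nat) : nat :=
  #|[set p : 'I_n * 'I_n | (p.1 < p.2)%N && (G i p.1 p.2 != G i.-1 p.1 p.2)]|.

Definition amortized_le (A : dyn_alg) k (c : nat) : Prop :=
  forall n (G : nat -> rel 'I_n), dyn_graph_seq G -> forall i : nat,
    \sum_(1 <= j < i.+1) round_inconsistent A k G j
      <= c * \sum_(1 <= j < i.+1) nchanges G j.

Definition kcycle_listing_O1 (k : nat) : Prop :=
  exists A : dyn_alg,
    [/\ small_messages A, listing_correct k A & exists c : nat, amortized_le A k c].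

(* Main.v *)
Require Import Defs.
From mathcomp Require Import all_boot.
From mathcomp Require Import zify.
Set Implicit Arguments. Unset Strict Implicit. Unset Printing Implicit Defensive.

Section Alg.
Variable n : nat.
Notation V := ('I_n).
Local Notation aitem := (V * bool)%type.
Local Notation bop := (option (V + ((V * V) + (V * V)))).
Local Notation msgT := (option aitem * bop)%type.

Record nst := NS { clk : nat; chg : bool; nb : {set V}; lt : V -> nat;
  aq : V -> seq aitem; rc : V -> {set V}; lrn : V -> V -> nat;
  tt : V -> {set V * V}; pp : V -> {set V}; bc : V -> {set V * V} }.

Definition enc (m : msgT) : nat := enum_rank m.
Definition dec (k : nat) : option msgT :=
  omap (fun i : 'I_#|{: msgT}| => enum_val i) (insub k).

Lemma dec_enc m : dec (enc m) = Some m.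
Proof. by rewrite /dec /enc valK /= enum_rankK. Qed.

Lemma card_msgT : #|{: msgT}| = ((n + n).+1 * (1 + n + (n * n + n * n)))%N.
Proof.
rewrite card_prod !card_option card_prod card_bool card_ord.
rewrite !card_sum !card_prod !card_ord. lia.
Qed.

Lemma enc_small m : enc m < (n.+2) ^ 5.
Proof.
rewrite /enc; apply: (leq_trans (ltn_ord (enum_rank m))).
rewrite [X in X <= _]card_msgT. rewrite !expnS expn0. nia.
Qed.

Definition dset (s : nst) (x : V) : {set V * V} :=
  if x \in nb s then [set p : V * V | (p.1 \in nb s) && (p.2 \in rc s p.1) && (lt s x <= lrn s p.1 p.2)]
  else set0.

Definition chooseB (s : nst) (x : V) : bop :=
  if [pick z in pp s x] is Some z then Some (inl z)
  else if [pick p in dset s x :\: tt s x] is Some p then Some (inr (inl p))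
  else if [pick p in tt s x :\: dset s x] is Some p then Some (inr (inr p))
  else None.

Definition applyT (o : bop) (T : {set V * V}) : {set V * V} :=
  match o with
  | Some (inl z) => [set p in T | p.1 != z]
  | Some (inr (inl p)) => p |: T
  | Some (inr (inr p)) => T :\ p
  | None => T end.
Definition applyP (o : bop) (P : {set V}) : {set V} :=
  if o is Some (inl z) then P :\ z else P.

Definition evs (ch : {ffun V -> option bool}) : seq aitem :=
  pmap (fun u => omap (pair u) (ch u)) (enum V).

Definition notify (s : nst) (ch : {ffun V -> option bool}) : nst :=
  let nb' := [set u | if ch u is Some b then b else u \in nb s] in
  let del := [set u | ch u == Some false] in
  NS (clk s).+1 [exists u, ch u != None] nb'
   (fun u => if ch u != None then (clk s).+1 else lt s u)
   (fun u => (if ch u != None then [::] else aq s u) ++ (if u \in nb' then evs ch else [::]))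
   (fun u => if ch u != None then set0 else rc s u)
   (fun u => if ch u != None then (fun _ => 0) else lrn s u)
   (fun u => if ch u != None then set0 else tt s u)
   (fun u => if ch u != None then set0 else if u \in nb' then pp s u :|: del else pp s u)
   (fun u => if ch u != None then set0 else bc s u).

Definition send (s : nst) (u : V) : option nat :=
  Some (enc (ohead (aq s u), chooseB s u)).

Definition aof (m : option nat) : option aitem :=
  if obind dec m is Some (Some a, _) then Some a else None.
Definition bof (m : option nat) : bop :=
  if obind dec m is Some (_, o) then o else None.

Definition recv (s : nst) (m : V -> option nat) : nst :=
  NS (clk s) (chg s) (nb s) (lt s)
   (fun x => if x \in nb s then behead (aq s x) else aq s x)
   (fun z => if aof (m z) is Some (w, b) then (if b then w |: rc s z else rc s z :\ w) else rc s z)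
   (fun z w' => if aof (m z) is Some (w, b) then (if w' == w then clk s else lrn s z w') else lrn s z w')
   (fun x => if x \in nb s then applyT (chooseB s x) (tt s x) else tt s x)
   (fun x => if x \in nb s then applyP (chooseB s x) (pp s x) else pp s x)
   (fun z => applyT (bof (m z)) (bc s z)).

Definition incons (s : nst) : bool :=
  chg s || [exists x in nb s, (aq s x != [::]) || (pp s x != set0) || (dset s x != tt s x)].

Definition edge_eq (p q a b : V) : bool := ((p == a) && (q == b)) || ((p == b) && (q == a)).

Definition cert (v : V) (s : nst) (H : seq V) (p q : V) : bool :=
  ((p == v) && (q \in nb s)) || ((q == v) && (p \in nb s)) ||
  [exists y, [exists z, [exists w, [&& y \in nb s, y \in H, z \in H, (z, w) \in bc s y &
      edge_eq p q y z || edge_eq p q z w]]]].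

Definition certified (v : V) (s : nst) (H : seq V) : bool :=
  all (fun e => cert v s H e.1 e.2) (zip H (rot 1 H)).

Definition query (v : V) (s : nst) (H : seq V) : answer :=
  if incons s then Ans_incons else if certified v s H then Ans_true else Ans_false.

Definition init : nst := NS 0 false set0 (fun _ => 0) (fun _ => [::]) (fun _ => set0)
  (fun _ _ => 0) (fun _ => set0) (fun _ => set0) (fun _ => set0).

End Alg.

Definition Alg : dyn_alg :=
  @DynAlg nst (fun n _ => @init n) (fun n _ s ch => notify s ch) (fun n _ s u => send s u)
    (fun n _ s m => recv s m) (fun n v s H => query v s H).

Lemma small_Alg : small_messages Alg.
Proof.
exists 5 => n v s u m /=; rewrite /send => -[<-]; exact: enc_small.
Qed.
Section Inv.
Variable n : nat.
Notation V := ('I_n).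
Variable G : nat -> rel V.
Hypothesis hsym : forall i u v, G i u v = G i v u.
Hypothesis hirr : forall i v, ~~ G i v v.
Hypothesis h0 : forall u v, ~~ G 0 u v.

Fixpoint lastins (j : nat) (y x : V) : nat :=
  if j is j'.+1 then (if G j y x && ~~ G j' y x then j else lastins j' y x) else 0.

Fixpoint lastval (q : seq (V * bool)) (w : V) : option bool :=
  if q is e :: q' then (if lastval q' w is Some b then Some b else if e.1 == w then Some e.2 else None)
  else None.

Definition S j : V -> nst n := run Alg G j.
Definition N j y : nst n := notify (S j y) (changes G j.+1 y).
Definition M j (z y : V) : option nat := if G j.+1 z y then send (N j z) y else None.

Lemma S_succ j y : S j.+1 y = recv (N j y) (fun z => M j z y).
Proof. by []. Qed.

Definition chd j (y x : V) : bool := G j.+1 y x != G j y x.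

Lemma changesE j y x : changes G j.+1 y x = if chd j y x then Some (G j.+1 y x) else None.
Proof. by rewrite /changes ffunE. Qed.

Lemma chdE j y x : (changes G j.+1 y x != None) = chd j y x.
Proof. by rewrite changesE; case: (chd j y x). Qed.

Lemma chd_sym j y x : chd j y x = chd j x y.
Proof. by rewrite /chd hsym [G j y x]hsym. Qed.

Lemma lastins_le j y x : lastins j y x <= j.
Proof. elim: j => //= j IH; case: ifP => // _; exact: leqW. Qed.

Lemma lastins_sym j y x : lastins j y x = lastins j x y.
Proof. by elim: j => //= j ->; rewrite hsym [G j y x]hsym. Qed.

Lemma lastins_succ j y x : lastins j.+1 y x = if G j.+1 y x && chd j y x then j.+1 else lastins j y x.
Proof.
rewrite /= /chd; case: (G j.+1 y x) => //=; by case: (G j y x).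
Qed.

Lemma lastval_cat q r w : lastval (q ++ r) w = if lastval r w is Some b then Some b else lastval q w.
Proof.
elim: q => [|e q IH] /=; first by case: (lastval r w).
rewrite IH; by case: (lastval r w).
Qed.

Lemma lastval_pmap (ch : {ffun V -> option bool}) w (s : seq V) : uniq s ->
  lastval (pmap (fun u => omap (pair u) (ch u)) s) w = if w \in s then ch w else None.
Proof.
elim: s => [|u s IH] //= /andP [us us'].
rewrite in_cons.
have E: lastval (pmap (fun u0 : V => omap (pair u0) (ch u0)) s) w = if w \in s then ch w else None by apply: IH.
case: (eqVneq w u) => [Ewu|nwu] /=.
  subst w; rewrite (negbTE us) in E.
  case: (ch u) => [b|] /=; by rewrite E ?eqxx.
have nuw : (u == w) = false by rewrite eq_sym (negbTE nwu).
by case: (ch u) => [b|] /=; rewrite E //; case: (w \in s) => //; case: (ch w) => //=; rewrite nuw.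
Qed.

Lemma lastval_evs (ch : {ffun V -> option bool}) w : lastval (evs ch) w = ch w.
Proof. by rewrite /evs lastval_pmap ?enum_uniq ?mem_enum. Qed.


Section Fields.
Variables (j : nat) (y : V).
Let ch := changes G j.+1 y.

Lemma N_nb x : (x \in nb (N j y)) = if chd j y x then G j.+1 y x else x \in nb (S j y).
Proof. by rewrite /N /= inE changesE; case: (chd j y x). Qed.
Lemma N_clk : clk (N j y) = (clk (S j y)).+1. Proof. by []. Qed.
Lemma N_chg : chg (N j y) = [exists u, chd j y u].
Proof. by rewrite /N /=; apply: eq_existsb => u; rewrite chdE. Qed.
Lemma N_lt x : lt (N j y) x = if chd j y x then (clk (S j y)).+1 else lt (S j y) x.
Proof. by rewrite /N /= chdE. Qed.
Lemma N_aq x : aq (N j y) x = (if chd j y x then [::] else aq (S j y) x) ++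
   (if x \in nb (N j y) then evs ch else [::]).
Proof. by rewrite /N /= chdE. Qed.
Lemma N_rc x : rc (N j y) x = if chd j y x then set0 else rc (S j y) x.
Proof. by rewrite /N /= chdE. Qed.
Lemma N_lrn x : lrn (N j y) x = if chd j y x then (fun _ => 0) else lrn (S j y) x.
Proof. by rewrite /N /= chdE. Qed.
Lemma N_tt x : tt (N j y) x = if chd j y x then set0 else tt (S j y) x.
Proof. by rewrite /N /= chdE. Qed.
Lemma N_bc x : bc (N j y) x = if chd j y x then set0 else bc (S j y) x.
Proof. by rewrite /N /= chdE. Qed.
Lemma N_pp x : pp (N j y) x = if chd j y x then set0 else
   if x \in nb (N j y) then pp (S j y) x :|: [set u | ch u == Some false] else pp (S j y) x.
Proof. by rewrite /N /= chdE. Qed.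

Lemma S_nb : nb (S j.+1 y) = nb (N j y). Proof. by []. Qed.
Lemma S_clk : clk (S j.+1 y) = clk (N j y). Proof. by []. Qed.
Lemma S_chg : chg (S j.+1 y) = chg (N j y). Proof. by []. Qed.
Lemma S_lt : lt (S j.+1 y) = lt (N j y). Proof. by []. Qed.
Lemma S_aq x : aq (S j.+1 y) x = if x \in nb (N j y) then behead (aq (N j y) x) else aq (N j y) x.
Proof. by []. Qed.
Lemma S_tt x : tt (S j.+1 y) x = if x \in nb (N j y) then applyT (chooseB (N j y) x) (tt (N j y) x) else tt (N j y) x.
Proof. by []. Qed.
Lemma S_pp x : pp (S j.+1 y) x = if x \in nb (N j y) then applyP (chooseB (N j y) x) (pp (N j y) x) else pp (N j y) x.
Proof. by []. Qed.
Lemma S_rc z : rc (S j.+1 y) z =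
  if aof n (M j z y) is Some (w, b) then (if b then w |: rc (N j y) z else rc (N j y) z :\ w) else rc (N j y) z.
Proof. by []. Qed.
Lemma S_lrn z w' : lrn (S j.+1 y) z w' =
  if aof n (M j z y) is Some (w, b) then (if w' == w then clk (N j y) else lrn (N j y) z w') else lrn (N j y) z w'.
Proof. by []. Qed.
Lemma S_bc z : bc (S j.+1 y) z = applyT (bof n (M j z y)) (bc (N j y) z).
Proof. by []. Qed.
End Fields.

Lemma aof_send (s : nst n) y : aof n (send s y) = ohead (aq s y).
Proof. by rewrite /aof /send /obind /oapp dec_enc; case: (ohead _). Qed.
Lemma bof_send (s : nst n) y : bof n (send s y) = chooseB s y.
Proof. by rewrite /bof /send /obind /oapp dec_enc. Qed.
Lemma aofM j z y : aof n (M j z y) = if G j.+1 z y then ohead (aq (N j z) y) else None.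
Proof. by rewrite /M; case: (G j.+1 z y); rewrite ?aof_send. Qed.
Lemma bofM j z y : bof n (M j z y) = if G j.+1 z y then chooseB (N j z) y else None.
Proof. by rewrite /M; case: (G j.+1 z y); rewrite ?bof_send. Qed.

Record Inv j : Prop := {
  i_nb : forall y x, (x \in nb (S j y)) = G j y x;
  i_clk : forall y, clk (S j y) = j;
  i_lt : forall y x, G j y x -> lt (S j y) x = lastins j y x;
  i_nl : forall y x, ~~ G j y x -> [/\ aq (S j y) x = [::], tt (S j y) x = set0 & pp (S j y) x = set0];
  i_4c : forall y x w b, G j y x -> lastval (aq (S j y) x) w = Some b -> b = G j y w;
  i_4a : forall y x w, G j y x -> lastval (aq (S j y) x) w = None -> w \in rc (S j x) y -> G j y w;
  i_4b : forall y x w, G j y x -> G j y w -> lastins j y x <= lastins j y w ->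
     lastval (aq (S j y) x) w = None -> (w \in rc (S j x) y) && (lastins j y w <= lrn (S j x) y w);
  i_5 : forall y x, G j y x -> bc (S j x) y = tt (S j y) x;
  i_6 : forall y z w, lrn (S j y) z w <= j;
  i_7 : forall y x p, p \in tt (S j y) x -> (p.1 \in nb (S j y)) || (p.1 \in pp (S j y) x) }.

Lemma Inv0 : Inv 0.
Proof.
split => /= [y x|//|//|//|y x w b|y x w|y x w|y x|//|y x p]; rewrite ?inE ?(negbTE (h0 y x)) //.
Qed.


Lemma notchd j y x : ~~ chd j y x -> G j.+1 y x = G j y x.
Proof. by rewrite /chd negbK => /eqP. Qed.

Lemma chooseB_spec (s : nst n) x :
  match chooseB s x return Prop with
  | Some (inl z) => z \in pp s x
  | Some (inr (inl p)) => pp s x = set0 /\ p \in dset s x :\: tt s x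
  | Some (inr (inr p)) => [/\ pp s x = set0, dset s x :\: tt s x = set0 & p \in tt s x :\: dset s x]
  | None => [/\ pp s x = set0, dset s x :\: tt s x = set0 & tt s x :\: dset s x = set0]
  end.
Proof.
rewrite /chooseB.
case: pickP => [z -> //|P0].
have eP : pp s x = set0 by apply/setP => z; rewrite [z \in set0]inE; exact: P0.
case: pickP => [p Hp|D0]; first by split.
have eD : dset s x :\: tt s x = set0 by apply/setP => z; rewrite [z \in set0]inE; exact: D0.
case: pickP => [p Hp|T0]; first by split.
by split => //; apply/setP => z; rewrite [z \in set0]inE; exact: T0.
Qed.

Lemma pop_inv (g : pred V) (f : V -> nat) (li t : nat) (q : seq (V * bool)) (R : {set V}) (L : V -> nat) :
  (forall w b, lastval q w = Some b -> b = g w) ->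
  (forall w, lastval q w = None -> w \in R -> g w) ->
  (forall w, g w -> li <= f w -> lastval q w = None -> (w \in R) && (f w <= L w)) ->
  (forall w, f w <= t) ->
  let R1 := if ohead q is Some (w0, b0) then (if b0 then w0 |: R else R :\ w0) else R in
  let L1 := fun w' => if ohead q is Some (w0, _) then (if w' == w0 then t else L w') else L w' in
  [/\ (forall w b, lastval (behead q) w = Some b -> b = g w),
      (forall w, lastval (behead q) w = None -> w \in R1 -> g w) &
      (forall w, g w -> li <= f w -> lastval (behead q) w = None -> (w \in R1) && (f w <= L1 w))].
Proof.
move=> Hc Ha Hb Ht /=.
case: q Hc Ha Hb => [|[w0 b0] q] Hc Ha Hb /=; first by split.
split.
- move=> w b E; apply: (Hc w b); by rewrite /= E.
- move=> w E; case: (eqVneq w w0) => [Ew|nw].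
    subst w; have := Hc w0 b0; rewrite /= E eqxx => /(_ erefl) eb; rewrite -eb.
    by destruct b0; rewrite ?inE ?eqxx.
  have Ew : lastval ((w0, b0) :: q) w = None by rewrite /= E eq_sym (negbTE nw).
  destruct b0; rewrite /= ?inE ?(negbTE nw) /=; exact: Ha.
- move=> w gw lw E; case: (eqVneq w w0) => [Ew|nw].
    subst w; have := Hc w0 b0; rewrite /= E eqxx => /(_ erefl) eb.
    rewrite -eb in gw; rewrite gw !inE eqxx /=; exact: Ht.
  have Ew : lastval ((w0, b0) :: q) w = None by rewrite /= E eq_sym (negbTE nw).
  have /andP [h1 h2] := Hb w gw lw Ew.
  rewrite h2 andbT.
  destruct b0; rewrite ?inE ?(negbTE nw) //=.
Qed.

Section Step.
Variable j : nat.
Hypothesis I : Inv j.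

Lemma nbN y x : (x \in nb (N j y)) = G j.+1 y x.
Proof.
rewrite N_nb; case: (boolP (chd j y x)) => // h; by rewrite (i_nb I) (notchd h).
Qed.

Lemma clkN y : clk (N j y) = j.+1.
Proof. by rewrite N_clk (i_clk I). Qed.

Lemma lastval_N y x w : G j.+1 y x -> lastval (aq (N j y) x) w =
  if chd j y w then Some (G j.+1 y w) else if chd j y x then None else lastval (aq (S j y) x) w.
Proof.
move=> Gx; rewrite N_aq nbN Gx lastval_cat lastval_evs changesE.
by case: (chd j y w) => //; case: (chd j y x).
Qed.

Lemma PN4 y x w : G j.+1 y x ->
  [/\ (forall b, lastval (aq (N j y) x) w = Some b -> b = G j.+1 y w),
      (lastval (aq (N j y) x) w = None -> w \in rc (N j x) y -> G j.+1 y w) &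
      (G j.+1 y w -> lastins j.+1 y x <= lastins j.+1 y w -> lastval (aq (N j y) x) w = None ->
          (w \in rc (N j x) y) && (lastins j.+1 y w <= lrn (N j x) y w))].
Proof.
move=> Gx; rewrite (lastval_N w Gx) N_rc N_lrn [chd j x y]chd_sym.
case: (boolP (chd j y w)) => cw; first by split => // b [].
rewrite !lastins_succ (negbTE cw) andbF (notchd cw).
case: (boolP (chd j y x)) => cx.
  split => //; rewrite ?inE // Gx /= => _ h.
  have := leq_trans h (lastins_le _ _ _); by rewrite ltnn.
have Gx0 : G j y x by rewrite -(notchd cx).
rewrite andbF; split.
- move=> b; exact: (i_4c I Gx0).
- exact: (i_4a I Gx0).
- exact: (i_4b I Gx0).
Qed.

Lemma A_end y x : G j.+1 y x ->
  [/\ (forall w b, lastval (aq (S j.+1 y) x) w = Some b -> b = G j.+1 y w),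
      (forall w, lastval (aq (S j.+1 y) x) w = None -> w \in rc (S j.+1 x) y -> G j.+1 y w) &
      (forall w, G j.+1 y w -> lastins j.+1 y x <= lastins j.+1 y w -> lastval (aq (S j.+1 y) x) w = None ->
          (w \in rc (S j.+1 x) y) && (lastins j.+1 y w <= lrn (S j.+1 x) y w))].
Proof.
move=> Gx.
have Hc : forall w b, lastval (aq (N j y) x) w = Some b -> b = G j.+1 y w by move=> w b; case: (PN4 w Gx) => h _ _; exact: h.
have Ha : forall w, lastval (aq (N j y) x) w = None -> w \in rc (N j x) y -> G j.+1 y w by move=> w; case: (PN4 w Gx).
have Hb : forall w, G j.+1 y w -> lastins j.+1 y x <= lastins j.+1 y w -> lastval (aq (N j y) x) w = None ->
          (w \in rc (N j x) y) && (lastins j.+1 y w <= lrn (N j x) y w) by move=> w; case: (PN4 w Gx).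
have := pop_inv (t := j.+1) Hc Ha Hb (fun w => lastins_le _ _ _).
move=> H; case: H => Hc1 Ha1 Hb1; split.
- move=> w b; rewrite S_aq nbN Gx; exact: Hc1.
- move=> w; rewrite S_aq nbN Gx S_rc aofM Gx; exact: Ha1.
- move=> w; rewrite S_aq nbN Gx S_rc S_lrn aofM Gx clkN; exact: Hb1.
Qed.

Lemma applyT_pu (z : V) (T : {set V * V}) : applyT (Some (inl z)) T = [set p in T | p.1 != z]. Proof. by []. Qed.
Lemma applyT_add (p : V * V) T : applyT (Some (inr (inl p))) T = p |: T. Proof. by []. Qed.
Lemma applyT_rem (p : V * V) T : applyT (Some (inr (inr p))) T = T :\ p. Proof. by []. Qed.
Lemma applyT_no (T : {set V * V}) : applyT None T = T. Proof. by []. Qed.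
Lemma applyP_pu z (P : {set V}) : applyP (Some (inl z)) P = P :\ z. Proof. by []. Qed.
Lemma applyP_add (p : V * V) (P : {set V}) : applyP (Some (inr (inl p))) P = P. Proof. by []. Qed.
Lemma applyP_rem (p : V * V) (P : {set V}) : applyP (Some (inr (inr p))) P = P. Proof. by []. Qed.
Lemma applyP_no (P : {set V}) : applyP None P = P. Proof. by []. Qed.

Lemma dset_nb (s : nst n) x p : p \in dset s x -> p.1 \in nb s.
Proof. rewrite /dset; case: ifP; rewrite ?inE // => _ /andP [/andP [-> _] _]. done. Qed.

Lemma PN7 y x p : p \in tt (N j y) x -> (p.1 \in nb (N j y)) || (p.1 \in pp (N j y) x).
Proof.
rewrite N_tt N_pp; case: (boolP (chd j y x)) => cx; first by rewrite inE.
move=> hp; case: (boolP (x \in nb (N j y))) => xN; last first.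
  move: xN; rewrite nbN (notchd cx) => nG.
  by case: (i_nl I nG) => _ e _; rewrite e inE in hp.
have := i_7 I hp; rewrite (i_nb I) nbN.
case/orP => [Gp|Pp]; last by rewrite inE Pp orbT.
case: (boolP (chd j y p.1)) => cp; last by rewrite (notchd cp) Gp.
apply/orP; right; rewrite inE; apply/orP; right.
rewrite inE changesE cp; move: cp; rewrite /chd Gp.
by case: (G j.+1 y p.1).
Qed.

Lemma Inv_succ : Inv j.+1.
Proof.
split.
- by move=> y x; rewrite S_nb nbN.
- by move=> y; rewrite S_clk clkN.
- move=> y x Gx; rewrite S_lt N_lt lastins_succ Gx /=.
  case: (boolP (chd j y x)) => cx; first by rewrite (i_clk I).
  by apply: (i_lt I); rewrite -(notchd cx).
- move=> y x nGx; rewrite S_aq S_tt S_pp !nbN (negbTE nGx) N_aq N_tt N_pp nbN (negbTE nGx) cats0.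
  case: (boolP (chd j y x)) => // cx.
  by apply: (i_nl I); rewrite -(notchd cx).
- by move=> y x w b Gx; case: (A_end Gx) => h _ _; exact: h.
- by move=> y x w Gx; case: (A_end Gx) => _ h _; exact: h.
- by move=> y x w Gx; case: (A_end Gx) => _ _ h; exact: h.
- move=> y x Gx; rewrite S_bc S_tt bofM Gx nbN Gx N_bc N_tt [chd j x y]chd_sym.
  case: (boolP (chd j y x)) => // cx; congr applyT.
  by apply: (i_5 I); rewrite -(notchd cx).
- move=> y z w; rewrite S_lrn clkN N_lrn.
  case: (aof _ _) => [[w0 b0]|]; first case: (w == w0) => //.
  + by case: (chd j y z) => //; apply: leqW; apply: (i_6 I).
  + by case: (chd j y z) => //; apply: leqW; apply: (i_6 I).
- move=> y x p; rewrite S_tt S_pp S_nb.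
  case: (boolP (x \in nb (N j y))) => xN; last exact: PN7.
  have := chooseB_spec (N j y) x.
  case: (chooseB (N j y) x) => [[z|[q|q]]|]; rewrite ?applyT_pu ?applyT_add ?applyT_rem ?applyT_no ?applyP_pu ?applyP_add ?applyP_rem ?applyP_no.
  + move=> _; rewrite inE => /andP [hp nz]; case/orP: (PN7 hp) => [-> //|hP].
    by rewrite !inE nz hP orbT.
  + move=> [_]; rewrite inE => /andP [_ hq]; rewrite in_setU1 => /orP [/eqP ->|hp]; last exact: PN7.
    by rewrite (dset_nb hq).
  + by move=> _; rewrite in_setD1 => /andP [_ hp]; exact: PN7.
  + by move=> _; exact: PN7.
Qed.

End Step.


Lemma InvAll j : Inv j.
Proof. elim: j => [|j IH]; [exact: Inv0 | exact: Inv_succ]. Qed.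

Lemma max4 (L0 L1 L2 L3 : nat) : (L1 <= L0 /\ L2 <= L0 /\ L3 <= L0) \/ (L0 <= L1 /\ L2 <= L1 /\ L3 <= L1) \/ (L0 <= L2 /\ L1 <= L2 /\ L3 <= L2) \/ (L0 <= L3 /\ L1 <= L3 /\ L2 <= L3).
Proof. lia. Qed.
Lemma max5 (L0 L1 L2 L3 L4 : nat) : (L1 <= L0 /\ L2 <= L0 /\ L3 <= L0 /\ L4 <= L0) \/ (L0 <= L1 /\ L2 <= L1 /\ L3 <= L1 /\ L4 <= L1) \/ (L0 <= L2 /\ L1 <= L2 /\ L3 <= L2 /\ L4 <= L2) \/ (L0 <= L3 /\ L1 <= L3 /\ L2 <= L3 /\ L4 <= L3) \/ (L0 <= L4 /\ L1 <= L4 /\ L2 <= L4 /\ L3 <= L4).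
Proof. lia. Qed.

Section Correct.
Variable J : nat.
Let I := InvAll J.

Definition okn (y : V) := ~~ incons (S J y).

Lemma ok_aq y x : okn y -> G J y x -> aq (S J y) x = [::].
Proof.
rewrite /okn /incons negb_or => /andP [_ /existsPn /(_ x)].
rewrite (i_nb I) => h Gx; move: h; rewrite Gx /= !negb_or => /andP [/andP [/negPn/eqP -> _] _] //.
Qed.

Lemma ok_dset y x : okn y -> G J y x -> dset (S J y) x = tt (S J y) x.
Proof.
rewrite /okn /incons negb_or => /andP [_ /existsPn /(_ x)].
rewrite (i_nb I) => h Gx; move: h; rewrite Gx /= !negb_or => /andP [_ /negPn/eqP -> //].
Qed.

Lemma ok_pp y x : okn y -> G J y x -> pp (S J y) x = set0.
Proof.
rewrite /okn /incons negb_or => /andP [_ /existsPn /(_ x)].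
rewrite (i_nb I) => h Gx; move: h; rewrite Gx /= !negb_or => /andP [/andP [_ /negPn/eqP -> //] _].
Qed.

Lemma knows x y z w : okn y -> okn z -> G J x y -> G J y z -> G J z w ->
  lastins J z y <= lastins J z w -> lastins J y x <= lastins J z w -> (z, w) \in bc (S J x) y.
Proof.
move=> oy oz Gxy Gyz Gzw l1 l2.
have Gyx : G J y x by rewrite hsym.
have Gzy : G J z y by rewrite hsym.
rewrite (i_5 I Gyx) -(ok_dset oy Gyx) /dset (i_nb I) Gyx inE /= (i_nb I) Gyz /=.
have /andP [-> h] : (w \in rc (S J y) z) && (lastins J z w <= lrn (S J y) z w).
  by apply: (i_4b I Gzy Gzw l1); rewrite (ok_aq oz Gzy).
rewrite (i_lt I Gyx) /=; exact: leq_trans l2 h.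
Qed.

Lemma cert_sound v H p q : {in H, forall u, okn u} -> cert v (S J v) H p q -> G J p q.
Proof.
move=> ok; rewrite /cert (i_nb I) (i_nb I).
case/orP => [/orP [/andP [/eqP -> //] | /andP [/eqP -> h]]|]; first by rewrite hsym.
case/existsP => y /existsP [z /existsP [w /and5P [yN yH zH zw he]]].
rewrite (i_nb I) in yN.
have Gyv : G J y v by rewrite hsym.
move: zw; rewrite (i_5 I Gyv) -(ok_dset (ok y yH) Gyv) /dset (i_nb I) Gyv inE /= (i_nb I).
case/andP => /andP [Gyz wR] _.
have Gzy : G J z y by rewrite hsym.
have Gzw : G J z w by apply: (i_4a I Gzy _ wR); rewrite (ok_aq (ok z zH) Gzy).
case/orP: he; rewrite /edge_eq => /orP [] /andP [/eqP -> /eqP ->] //; by rewrite hsym.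
Qed.

Lemma complete4 H a b c d : {in H, forall u, okn u} -> a \in H -> d \in H ->
  G J a b -> G J b c -> G J c d -> G J d a ->
  lastins J c d <= lastins J a b -> lastins J d a <= lastins J a b ->
  forall p q, edge_eq p q a b || edge_eq p q b c || edge_eq p q c d || edge_eq p q d a ->
  cert c (S J c) H p q.
Proof.
move=> ok aH dH Gab Gbc Gcd Gda l1 l2 p q he.
have kn : (a, b) \in bc (S J c) d.
  apply: knows => //; try exact: ok.
  - by rewrite lastins_sym.
  - by rewrite lastins_sym.
have cd : d \in nb (S J c) by rewrite (i_nb I).
have cb : b \in nb (S J c) by rewrite (i_nb I) hsym.
have ex : forall p q, edge_eq p q d a || edge_eq p q a b -> cert c (S J c) H p q.
  move=> p' q' h; rewrite /cert; apply/orP; right; apply/existsP; exists d; apply/existsP; exists a; apply/existsP; exists b.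
  by rewrite cd dH aH kn.
rewrite /edge_eq in he; rewrite /cert.
case/orP: he => [/orP [/orP [he|he]|he]|he].
- by apply: ex; rewrite /edge_eq he orbT.
- case/orP: he => /andP [/eqP -> /eqP ->]; by rewrite eqxx cb ?orbT.
- case/orP: he => /andP [/eqP -> /eqP ->]; by rewrite eqxx cd ?orbT.
- by apply: ex; rewrite /edge_eq he.
Qed.


Lemma complete5 H a b c d e : {in H, forall u, okn u} -> a \in H -> b \in H -> c \in H -> e \in H ->
  G J a b -> G J b c -> G J c d -> G J d e -> G J e a ->
  lastins J b c <= lastins J a b -> lastins J c d <= lastins J a b ->
  lastins J d e <= lastins J a b -> lastins J e a <= lastins J a b ->
  forall p q, edge_eq p q a b || edge_eq p q b c || edge_eq p q c d || edge_eq p q d e || edge_eq p q e a ->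
  cert d (S J d) H p q.
Proof.
move=> ok aH bH cH eH Gab Gbc Gcd Gde Gea l1 l2 l3 l4 p q he.
have k1 : (a, b) \in bc (S J d) e.
  apply: (knows (ok e eH) (ok a aH) Gde Gea Gab); first by rewrite lastins_sym.
  by rewrite lastins_sym.
have k2 : (b, a) \in bc (S J d) c.
  have Gdc : G J d c by rewrite hsym.
  have Gcb : G J c b by rewrite hsym.
  have Gba : G J b a by rewrite hsym.
  by apply: (knows (ok c cH) (ok b bH) Gdc Gcb Gba); rewrite [lastins J b a]lastins_sym.
have dc : c \in nb (S J d) by rewrite (i_nb I) hsym.
have de : e \in nb (S J d) by rewrite (i_nb I).
have ex1 : forall p q, edge_eq p q e a || edge_eq p q a b -> cert d (S J d) H p q.
  move=> p' q' h; rewrite /cert; apply/orP; right; apply/existsP; exists e; apply/existsP; exists a; apply/existsP; exists b.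
  by rewrite de eH aH k1.
have ex2 : forall p q, edge_eq p q c b || edge_eq p q b a -> cert d (S J d) H p q.
  move=> p' q' h; rewrite /cert; apply/orP; right; apply/existsP; exists c; apply/existsP; exists b; apply/existsP; exists a.
  by rewrite dc cH bH k2.
rewrite /edge_eq in he; rewrite /cert.
case/orP: he => [/orP [/orP [/orP [he|he]|he]|he]|he].
- by apply: ex1; rewrite /edge_eq he orbT.
- apply: ex2; rewrite /edge_eq; case/orP: he => /andP [-> ->]; by rewrite ?orbT.
- case/orP: he => /andP [/eqP -> /eqP ->]; by rewrite eqxx dc ?orbT.
- case/orP: he => /andP [/eqP -> /eqP ->]; by rewrite eqxx de ?orbT.
- by apply: ex1; rewrite /edge_eq he.
Qed.

End Correct.


Lemma ok_same i u x : okn i.+1 u -> G i.+1 u x = G i u x.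
Proof.
rewrite /okn /incons S_chg N_chg negb_or => /andP [/existsPn /(_ x) h _].
exact: notchd.
Qed.

Lemma respE i v H : resp Alg G i v H = query v (S i v) H.
Proof. by []. Qed.

Lemma cyc_ok i (H : seq V) : {in H, forall u, okn i.+1 u} ->
  (forall p q, p \in H -> G i.+1 p q = G i p q).
Proof. move=> ok p q pH; exact: ok_same (ok p pH). Qed.

Lemma listing4 i (H : seq V) : size H = 4 -> uniq H ->
    (exists2 v, v \in H & is_incons (resp Alg G i.+1 v H)) \/
    ((exists2 v, v \in H & is_yes (resp Alg G i.+1 v H)) <-> is_kcycle 4 (G i) H).
Proof.
move=> sH uH.
case: (boolP (has (fun v => incons (S i.+1 v)) H)) => [/hasP [v vH hv]|].
  by left; exists v => //; rewrite respE /query hv.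
move=> /hasPn ok; right.
have same := cyc_ok ok.
case: H sH uH ok same => [|x0 [|x1 [|x2 [|x3 [|? ?]]]]] // _ uH ok same.
have cycE : cycle (G i) [:: x0; x1; x2; x3] = [&& G i x0 x1, G i x1 x2, G i x2 x3 & G i x3 x0] by rewrite /= andbT.
rewrite /is_kcycle cycE.
split.
- case=> v vH; rewrite respE /query; case: (incons _) => //.
  rewrite /certified /=; case: ifP => // /and5P [c0 c1 c2 c3 _] _.
  have s0 := cert_sound ok c0; have s1 := cert_sound ok c1; have s2 := cert_sound ok c2; have s3 := cert_sound ok c3.
  rewrite !same ?inE ?eqxx ?orbT // in s0 s1 s2 s3.
  by split => //; rewrite s0 s1 s2 s3.
- case=> _ _ /and4P [g0 g1 g2 g3].
  rewrite -!same ?inE ?eqxx ?orbT // in g0 g1 g2 g3.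
  have yes : forall c, c \in [:: x0; x1; x2; x3] ->
    (forall p q, edge_eq p q x0 x1 || edge_eq p q x1 x2 || edge_eq p q x2 x3 || edge_eq p q x3 x0 -> cert c (S i.+1 c) [:: x0; x1; x2; x3] p q) ->
    exists2 v, v \in [:: x0; x1; x2; x3] & is_yes (resp Alg G i.+1 v [:: x0; x1; x2; x3]).
    move=> c cH hc; exists c => //; rewrite respE /query.
    have -> : incons (S i.+1 c) = false by apply/negbTE/ok.
    rewrite /certified /= !hc //; by rewrite /edge_eq !eqxx ?orbT.
  have L := max4 (lastins i.+1 x0 x1) (lastins i.+1 x1 x2) (lastins i.+1 x2 x3) (lastins i.+1 x3 x0).
  case: L => [[l1 [l2 l3]]|[[l1 [l2 l3]]|[[l1 [l2 l3]]|[l1 [l2 l3]]]]].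
  + apply: (yes x2); first by rewrite !inE eqxx ?orbT.
    move=> p q he; apply: (complete4 (a := x0) (b := x1) (d := x3) ok) => //; rewrite ?inE ?eqxx ?orbT //.
  + apply: (yes x3); first by rewrite !inE eqxx ?orbT.
    move=> p q he; apply: (complete4 (a := x1) (b := x2) (d := x0) ok) => //; rewrite ?inE ?eqxx ?orbT //;
    by move: he; case: (edge_eq p q x0 x1); case: (edge_eq p q x1 x2); case: (edge_eq p q x2 x3); case: (edge_eq p q x3 x0).
  + apply: (yes x0); first by rewrite !inE eqxx ?orbT.
    move=> p q he; apply: (complete4 (a := x2) (b := x3) (d := x1) ok) => //; rewrite ?inE ?eqxx ?orbT //;
    by move: he; case: (edge_eq p q x0 x1); case: (edge_eq p q x1 x2); case: (edge_eq p q x2 x3); case: (edge_eq p q x3 x0).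
  + apply: (yes x1); first by rewrite !inE eqxx ?orbT.
    move=> p q he; apply: (complete4 (a := x3) (b := x0) (d := x2) ok) => //; rewrite ?inE ?eqxx ?orbT //;
    by move: he; case: (edge_eq p q x0 x1); case: (edge_eq p q x1 x2); case: (edge_eq p q x2 x3); case: (edge_eq p q x3 x0).
Qed.


Lemma listing5 i (H : seq V) : size H = 5 -> uniq H ->
    (exists2 v, v \in H & is_incons (resp Alg G i.+1 v H)) \/
    ((exists2 v, v \in H & is_yes (resp Alg G i.+1 v H)) <-> is_kcycle 5 (G i) H).
Proof.
move=> sH uH.
case: (boolP (has (fun v => incons (S i.+1 v)) H)) => [/hasP [v vH hv]|].
  by left; exists v => //; rewrite respE /query hv.
move=> /hasPn ok; right.
have same := cyc_ok ok.
case: H sH uH ok same => [|x0 [|x1 [|x2 [|x3 [|x4 [|? ?]]]]]] // _ uH ok same.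
have cycE : cycle (G i) [:: x0; x1; x2; x3; x4] = [&& G i x0 x1, G i x1 x2, G i x2 x3, G i x3 x4 & G i x4 x0] by rewrite /= andbT.
rewrite /is_kcycle cycE.
split.
- case=> v vH; rewrite respE /query; case: (incons _) => //.
  rewrite /certified /=; case: ifP => // /and5P [c0 c1 c2 c3 /andP [c4 _]] _.
  have s0 := cert_sound ok c0; have s1 := cert_sound ok c1; have s2 := cert_sound ok c2; have s3 := cert_sound ok c3; have s4 := cert_sound ok c4.
  rewrite !same ?inE ?eqxx ?orbT // in s0 s1 s2 s3 s4.
  by split => //; rewrite s0 s1 s2 s3 s4.
- case=> _ _ /and5P [g0 g1 g2 g3 g4].
  rewrite -!same ?inE ?eqxx ?orbT // in g0 g1 g2 g3 g4.
  have yes : forall c, c \in [:: x0; x1; x2; x3; x4] ->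
    (forall p q, edge_eq p q x0 x1 || edge_eq p q x1 x2 || edge_eq p q x2 x3 || edge_eq p q x3 x4 || edge_eq p q x4 x0 -> cert c (S i.+1 c) [:: x0; x1; x2; x3; x4] p q) ->
    exists2 v, v \in [:: x0; x1; x2; x3; x4] & is_yes (resp Alg G i.+1 v [:: x0; x1; x2; x3; x4]).
    move=> c cH hc; exists c => //; rewrite respE /query.
    have -> : incons (S i.+1 c) = false by apply/negbTE/ok.
    rewrite /certified /= !hc //; by rewrite /edge_eq !eqxx ?orbT.
  have L := max5 (lastins i.+1 x0 x1) (lastins i.+1 x1 x2) (lastins i.+1 x2 x3) (lastins i.+1 x3 x4) (lastins i.+1 x4 x0).
  case: L => [[l1 [l2 [l3 l4]]]|[[l1 [l2 [l3 l4]]]|[[l1 [l2 [l3 l4]]]|[[l1 [l2 [l3 l4]]]|[l1 [l2 [l3 l4]]]]]]].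
  + apply: (yes x3); first by rewrite !inE eqxx ?orbT.
    move=> p q he; apply: (complete5 (a := x0) (b := x1) (c := x2) (e := x4) ok) => //; rewrite ?inE ?eqxx ?orbT //;
    by move: he; case: (edge_eq p q x0 x1); case: (edge_eq p q x1 x2); case: (edge_eq p q x2 x3); case: (edge_eq p q x3 x4); case: (edge_eq p q x4 x0).
  + apply: (yes x4); first by rewrite !inE eqxx ?orbT.
    move=> p q he; apply: (complete5 (a := x1) (b := x2) (c := x3) (e := x0) ok) => //; rewrite ?inE ?eqxx ?orbT //;
    by move: he; case: (edge_eq p q x0 x1); case: (edge_eq p q x1 x2); case: (edge_eq p q x2 x3); case: (edge_eq p q x3 x4); case: (edge_eq p q x4 x0).
  + apply: (yes x0); first by rewrite !inE eqxx ?orbT.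
    move=> p q he; apply: (complete5 (a := x2) (b := x3) (c := x4) (e := x1) ok) => //; rewrite ?inE ?eqxx ?orbT //;
    by move: he; case: (edge_eq p q x0 x1); case: (edge_eq p q x1 x2); case: (edge_eq p q x2 x3); case: (edge_eq p q x3 x4); case: (edge_eq p q x4 x0).
  + apply: (yes x1); first by rewrite !inE eqxx ?orbT.
    move=> p q he; apply: (complete5 (a := x3) (b := x4) (c := x0) (e := x2) ok) => //; rewrite ?inE ?eqxx ?orbT //;
    by move: he; case: (edge_eq p q x0 x1); case: (edge_eq p q x1 x2); case: (edge_eq p q x2 x3); case: (edge_eq p q x3 x4); case: (edge_eq p q x4 x0).
  + apply: (yes x2); first by rewrite !inE eqxx ?orbT.
    move=> p q he; apply: (complete5 (a := x4) (b := x0) (c := x1) (e := x3) ok) => //; rewrite ?inE ?eqxx ?orbT //;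
    by move: he; case: (edge_eq p q x0 x1); case: (edge_eq p q x1 x2); case: (edge_eq p q x2 x3); case: (edge_eq p q x3 x4); case: (edge_eq p q x4 x0).
Qed.


Lemma cardsum (T : finType) (P : pred T) : #|[set z | P z]| = \sum_z (P z : nat).
Proof. rewrite -sum1_card big_mkcond /=; apply: eq_bigr => z _; rewrite inE; by case: (P z). Qed.

Lemma sum_pairs (T : finType) (P : T -> T -> bool) : \sum_z #|[set u | P z u]| = #|[set p : T * T | P p.1 p.2]|.
Proof.
rewrite cardsum (eq_bigr (fun z => \sum_u (P z u : nat))); last by move=> z _; rewrite cardsum.
by rewrite pair_big.
Qed.

Definition cnt j (y : V) := #|[set u | chd j y u]|.
Definition delta j := nchanges G j.

Lemma chd_irr j v : chd j v v = false.
Proof. by rewrite /chd (negbTE (hirr _ _)) (negbTE (hirr _ _)). Qed.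

Lemma sum_cnt j : \sum_z cnt j z <= 2 * delta j.+1.
Proof.
rewrite /cnt sum_pairs /delta /nchanges /=.
set A := [set p : V * V | (p.1 < p.2) && _].
have sub : [set p : V * V | chd j p.1 p.2] \subset A :|: [set (p.2, p.1) | p in A].
  apply/subsetP => -[a b]; rewrite inE /= => cab.
  have nab : a != b by apply/eqP => eab; rewrite eab chd_irr in cab.
  case: (ltngtP a b) => hab.
  - by rewrite inE; apply/orP; left; rewrite inE /= hab.
  - rewrite inE; apply/orP; right; apply/imsetP; exists (b, a) => //.
    by rewrite inE /= hab -/(chd j b a) chd_sym.
  - by move/val_inj: hab => eab; rewrite eab eqxx in nab.
apply: (leq_trans (subset_leq_card sub)); apply: (leq_trans (leq_card_setU _ _)).
by rewrite mul2n -addnn leq_add2l leq_imset_card.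
Qed.

Lemma cnt_le j y : cnt j y <= 2 * delta j.+1.
Proof.
apply: leq_trans (sum_cnt j); by rewrite (bigD1 y) //= leq_addr.
Qed.


Definition teff (P : {set V}) (T : {set V * V}) := [set p in T | p.1 \notin P].
Definition psi3 (P : {set V}) (T D : {set V * V}) := #|P| + #|D :\: teff P T| + #|teff P T :\: D|.
Definition psiB (s : nst n) x := psi3 (pp s x) (tt s x) (dset s x).

Lemma teff0 T : teff set0 T = T.
Proof. by apply/setP => p; rewrite inE inE andbT. Qed.

Lemma dec1 a b c : a + b + c + (0 < a.+1 + b + c) <= a.+1 + b + c.
Proof. by rewrite !addSn ltn0Sn addn1. Qed.

Lemma psi3_op (s : nst n) x :
  psi3 (applyP (chooseB s x) (pp s x)) (applyT (chooseB s x) (tt s x)) (dset s x) + (0 < psiB s x) <= psiB s x.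
Proof.
rewrite /psiB; have := chooseB_spec s x.
case: (chooseB s x) => [[z|[p|p]]|]; rewrite ?applyT_pu ?applyT_add ?applyT_rem ?applyT_no ?applyP_pu ?applyP_add ?applyP_rem ?applyP_no.
- move=> zP.
  have E : teff (pp s x :\ z) [set p in tt s x | p.1 != z] = teff (pp s x) (tt s x).
    apply/setP => q; rewrite !inE; case: (eqVneq q.1 z) => [->|nq]; first by rewrite zP !andbF.
    by rewrite andbT.
  rewrite /psi3 E.
  have cP := cardsD1 z (pp s x); rewrite zP in cP.
  rewrite cP; exact: dec1.
- move=> [eP hp]; rewrite /psi3 eP cards0 !teff0 !add0n.
  have E1 : dset s x :\: (p |: tt s x) = (dset s x :\: tt s x) :\ p.
    by apply/setP => q; rewrite !inE negb_or andbA [(q != p) && _]andbC.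
  have E2 : (p |: tt s x) :\: dset s x = tt s x :\: dset s x.
    apply/setP => q; rewrite !inE; case: (eqVneq q p) => [->|] //=.
    by move: hp; rewrite inE => /andP [_ ->].
  rewrite E1 E2.
  have cD := cardsD1 p (dset s x :\: tt s x); rewrite hp in cD.
  rewrite cD; exact: (dec1 0).
- move=> [eP eD hp]; rewrite /psi3 eP cards0 !teff0 !add0n.
  have E1 : dset s x :\: (tt s x :\ p) = set0.
    apply/setP => q; rewrite !inE; apply/negbTE; rewrite negb_and negbK.
    case: (eqVneq q p) => [->|nq] /=.
      by move: hp; rewrite inE => /andP [-> _].
    move/setP: eD => /(_ q); rewrite !inE; by case: (q \in tt s x); case: (q \in dset s x).
  have E2 : (tt s x :\ p) :\: dset s x = (tt s x :\: dset s x) :\ p.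
    apply/setP => q; rewrite !inE; by case: (q \in tt s x); case: (q \in dset s x); case: (q == p).
  rewrite E1 E2 eD cards0 add0n.
  have cD := cardsD1 p (tt s x :\: dset s x); rewrite hp in cD.
  by rewrite !add0n cD add1n ltn0Sn addn1.
- move=> [eP eD eT]; rewrite /psi3 eP cards0 !teff0 eD eT cards0.
  done.
Qed.

Lemma psi3_D P T D1 D2 : psi3 P T D1 <= psi3 P T D2 + #|D1 :\: D2| + #|D2 :\: D1|.
Proof.
rewrite /psi3; set te := teff P T.
have h1 : #|D1 :\: te| <= #|D2 :\: te| + #|D1 :\: D2|.
  apply: leq_trans (leq_card_setU _ _); apply: subset_leq_card; apply/subsetP => p.
  rewrite in_setU !in_setD; case: (p \in D2); case: (p \in te); case: (p \in D1) => //.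
have h2 : #|te :\: D1| <= #|te :\: D2| + #|D2 :\: D1|.
  apply: leq_trans (leq_card_setU _ _); apply: subset_leq_card; apply/subsetP => p.
  rewrite in_setU !in_setD; case: (p \in D2); case: (p \in te); case: (p \in D1) => //.
lia.
Qed.


Lemma cnt_enum (T : finType) (P : pred T) : count P (enum T) = #|[set u | P u]|.
Proof. by rewrite -sum1_count big_enum_cond /= sum1_card cardsE. Qed.

Lemma size_evs j y : size (evs (changes G j.+1 y)) = cnt j y.
Proof.
rewrite /evs size_pmap cnt_enum /cnt; apply: eq_card => u; rewrite !inE -chdE.
by case: (changes G j.+1 y u).
Qed.

Definition aL k y x := size (aq (S k y) x).
Definition Sin k y := \sum_z aL k z y.
Definition Psi k y x := aL k y x + psiB (S k y) x + 2 * Sin k y.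
Definition Phi k := \max_(p : V * V) Psi k p.1 p.2.
Definition Fset k y := [set z : V | aof n (M k z y) != None].

Lemma dset_mem (s : nst n) x p : x \in nb s ->
  (p \in dset s x) = (p.1 \in nb s) && (p.2 \in rc s p.1) && (lt s x <= lrn s p.1 p.2).
Proof. by rewrite /dset => ->; rewrite inE. Qed.

Section Amort.
Variable j : nat.
Let I := InvAll j.

Lemma aqN_nl y x : ~~ G j.+1 y x -> aq (N j y) x = [::].
Proof.
move=> h; rewrite N_aq (nbN I) (negbTE h) cats0; case: (boolP (chd j y x)) => // c.
by case: (i_nl I (y := y) (x := x)); rewrite -?(notchd c).
Qed.

Lemma ttppN_nl y x : ~~ G j.+1 y x -> tt (N j y) x = set0 /\ pp (N j y) x = set0.
Proof.
move=> h; rewrite N_tt N_pp (nbN I) (negbTE h); case: (boolP (chd j y x)) => // c.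
by case: (i_nl I (y := y) (x := x)); rewrite -?(notchd c).
Qed.

Lemma aofM_some z y : (aof n (M j z y) != None) = (0 < size (aq (N j z) y)).
Proof.
rewrite aofM; case: (boolP (G j.+1 z y)) => h; last by rewrite aqN_nl.
by case: (aq (N j z) y).
Qed.

Lemma aL_succ y x : aL j.+1 y x + (0 < size (aq (N j y) x)) = size (aq (N j y) x).
Proof.
rewrite /aL S_aq (nbN I); case: (boolP (G j.+1 y x)) => h; last by rewrite aqN_nl.
by case: (aq (N j y) x) => //= a l; rewrite addn1.
Qed.

Lemma Sin_succ y : Sin j.+1 y + #|Fset j y| = \sum_z size (aq (N j z) y).
Proof.
rewrite /Sin /Fset cardsum -big_split; apply: eq_bigr => z _.
by rewrite /= aofM_some aL_succ.
Qed.

Lemma size_aqN y x : size (aq (N j y) x) <= aL j y x + cnt j y.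
Proof.
rewrite N_aq size_cat /aL; apply: leq_add; first by case: (chd j y x).
by case: (x \in nb (N j y)); rewrite ?size_evs.
Qed.

Lemma size_aqN_ge y x : ~~ chd j y x -> aL j y x <= size (aq (N j y) x).
Proof. by move=> c; rewrite N_aq (negbTE c) size_cat leq_addr. Qed.

Lemma dset_diff y x : G j.+1 y x ->
  #|dset (S j.+1 y) x :\: dset (N j y) x| + #|dset (N j y) x :\: dset (S j.+1 y) x| <= #|Fset j y|.
Proof.
move=> Gx.
set D1 := dset (S j.+1 y) x; set D2 := dset (N j y) x.
pose wof z := if aof n (M j z y) is Some (w, _) then w else z.
have sub : (D1 :\: D2) :|: (D2 :\: D1) \subset [set (z, wof z) | z in Fset j y].
  apply/subsetP => -[z w] hp.
  have diff : (z, w) \in D1 != ((z, w) \in D2).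
    by move: hp; rewrite !inE; case: ((z, w) \in D1); case: ((z, w) \in D2).
  have xS : x \in nb (S j.+1 y) by rewrite S_nb (nbN I).
  have xN : x \in nb (N j y) by rewrite (nbN I).
  move: diff; rewrite /D1 /D2 (dset_mem _ xS) (dset_mem _ xN) -[(z, w).1]/z -[(z, w).2]/w S_nb S_rc S_lrn S_lt => diff.
  apply/imsetP; exists z; last first.
    congr pair; rewrite /wof.
    move: diff; case: (aof n (M j z y)) => [[w0 b0]|]; last by rewrite eqxx.
    case: (eqVneq w w0) => // nw; destruct b0; rewrite ?in_setU1 ?in_setD1 (negbTE nw) /= ?eqxx; by move=> ?.
  rewrite inE; move: diff.
  by case: (aof n (M j z y)) => //; rewrite eqxx.
have cU := cardsUI (D1 :\: D2) (D2 :\: D1).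
have e0 : (D1 :\: D2) :&: (D2 :\: D1) = set0.
  by apply/setP => p; rewrite !inE; case: (p \in D1); case: (p \in D2).
move: cU; rewrite e0 cards0 addn0 => <-.
apply: (leq_trans (subset_leq_card sub)); exact: leq_imset_card.
Qed.


Lemma psi3_00 D : psi3 set0 set0 D = #|D|.
Proof.
rewrite /psi3 teff0 cards0 add0n setD0.
have -> : set0 :\: D = set0 by apply/setP => p; rewrite !inE andbF.
by rewrite cards0 addn0.
Qed.

Lemma psiB_succ y x : psiB (S j.+1 y) x + (0 < psiB (N j y) x) <= psiB (N j y) x + #|Fset j y|.
Proof.
case: (boolP (G j.+1 y x)) => Gx; last first.
  have [eT eP] := ttppN_nl Gx.
  have xS : x \notin nb (S j.+1 y) by rewrite S_nb (nbN I).
  have xN : x \notin nb (N j y) by rewrite (nbN I).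
  rewrite /psiB S_pp S_tt !(ifN _ _ xN) eT eP /dset (ifN _ _ xS) ?(ifN _ _ xN) psi3_00 cards0.
  done.
have xN : x \in nb (N j y) by rewrite (nbN I).
rewrite {1}/psiB S_pp S_tt xN.
apply: leq_trans (leq_add (psi3_D _ _ _ (dset (N j y) x)) (leqnn _)) _.
have := psi3_op (N j y) x; have := dset_diff Gx; lia.
Qed.

Lemma psiB_N y x : psiB (N j y) x <= psiB (S j y) x + cnt j y.
Proof.
rewrite /psiB N_pp N_tt.
case: (boolP (chd j y x)) => cx.
  have -> : dset (N j y) x = set0.
    rewrite /dset; case: ifP => // _; apply/setP => p; rewrite !inE N_lt cx N_lrn (i_clk I).
    case: (chd j y p.1); rewrite ?andbF //.
    by rewrite ltnNge (i_6 I) !andbF.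
  by rewrite psi3_00 cards0.
case: (boolP (G j y x)) => Gx0; last first.
  have xN : x \notin nb (N j y) by rewrite (nbN I) (notchd cx).
  case: (i_nl I Gx0) => _ -> ->; rewrite (negbTE xN) /dset (negbTE xN) psi3_00 cards0; done.
have xN : x \in nb (N j y) by rewrite (nbN I) (notchd cx).
have xS : x \in nb (S j y) by rewrite (i_nb I).
rewrite xN.
set P := pp (S j y) x; set T := tt (S j y) x.
set Del := [set u | changes G j.+1 y u == Some false].
set D := dset (S j y) x; set D' := dset (N j y) x.
have memD' : forall p, p \in D' = (p \in D) && ~~ chd j y p.1.
  move=> p; rewrite /D' /D (dset_mem _ xN) (dset_mem _ xS) N_nb N_rc N_lrn N_lt (negbTE cx).
  case: (boolP (chd j y p.1)) => cp; first by rewrite inE !andbF.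
  by rewrite andbT.
have delE : forall p, p \in D -> chd j y p.1 -> p.1 \in Del.
  move=> p; rewrite /D (dset_mem _ xS) (i_nb I) => /andP [/andP [Gp _] _] cp.
  rewrite inE changesE cp; move: cp; rewrite /chd Gp; by case: (G j.+1 y p.1).
have delC : forall u, u \in Del -> chd j y u.
  move=> u; rewrite inE changesE; by case: (chd j y u).
have h1 : #|P :|: Del| <= #|P| + cnt j y.
  apply: leq_trans (leq_card_setU _ _) _; rewrite leq_add2l; apply: subset_leq_card.
  by apply/subsetP => u /delC; rewrite inE.
have h2 : #|D' :\: teff (P :|: Del) T| <= #|D :\: teff P T|.
  apply: subset_leq_card; apply/subsetP => p; rewrite !inE memD' => /andP [hn /andP [hD cp]].
  rewrite hD andbT; have hnd : (changes G j.+1 y p.1 == Some false) = false by rewrite changesE (negbTE cp).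
  by rewrite hnd orbF in hn.
have h3 : #|teff (P :|: Del) T :\: D'| <= #|teff P T :\: D|.
  apply: subset_leq_card; apply/subsetP => p; rewrite !inE memD' => /andP [hn /andP [hT hP]].
  move: hP; rewrite negb_or => /andP [hP hDel].
  rewrite hT hP andbT /= andbT; apply/negP => hD.
  move: hn; rewrite hD /= negbK => cp.
  by have := delE p hD cp; rewrite inE (negbTE hDel).
rewrite /psi3; lia.
Qed.

Lemma Psi_core y x : Psi j.+1 y x + (0 < size (aq (N j y) x)) + (0 < psiB (N j y) x) + #|Fset j y|
   <= size (aq (N j y) x) + psiB (N j y) x + 2 * \sum_z size (aq (N j z) y).
Proof.
rewrite /Psi; have := aL_succ y x; have := psiB_succ y x; have := Sin_succ y; lia.
Qed.

Lemma sumN_le y : \sum_z size (aq (N j z) y) <= Sin j y + \sum_z cnt j z.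
Proof.
rewrite /Sin -big_split; apply: leq_sum => z _; exact: size_aqN.
Qed.

Lemma Psi_change y x : Psi j.+1 y x <= Psi j y x + 8 * delta j.+1.
Proof.
have := Psi_core y x; have := size_aqN y x; have := psiB_N y x; have := sumN_le y.
have := sum_cnt j; have := cnt_le j y; rewrite /Psi; lia.
Qed.

Lemma nochg : delta j.+1 = 0 -> forall y u, ~~ chd j y u.
Proof.
move=> d0 y u; have := sum_cnt j; rewrite d0 muln0 leqn0 => /eqP.
move/eqP; rewrite sum_nat_eq0 => /forallP /(_ y) /implyP /(_ isT) /eqP.
rewrite /cnt => /eqP; rewrite cards_eq0 => /eqP /setP /(_ u); rewrite !inE => ->.
done.
Qed.

Lemma psiB_N_static y x : (forall u, ~~ chd j y u) -> psiB (N j y) x = psiB (S j y) x.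
Proof.
move=> nc.
have enb : nb (N j y) = nb (S j y) by apply/setP => u; rewrite N_nb (negbTE (nc u)).
have eD : dset (N j y) x = dset (S j y) x.
  rewrite /dset enb; case: ifP => // _; apply/setP => p; rewrite !inE N_rc N_lrn N_lt !(negbTE (nc _)).
  done.
have eDel : [set u | changes G j.+1 y u == Some false] = set0.
  by apply/setP => u; rewrite !inE changesE (negbTE (nc u)).
by rewrite /psiB eD N_pp N_tt (negbTE (nc x)) eDel setU0; case: (x \in nb (N j y)).
Qed.

Lemma Psi_static y x : delta j.+1 = 0 -> Psi j.+1 y x + (0 < Psi j y x) <= Psi j y x.
Proof.
move=> d0; have nc := nochg d0.
have e1 : \sum_z cnt j z = 0.
  by have := sum_cnt j; rewrite d0 muln0 leqn0 => /eqP.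
have hS := sumN_le y; rewrite e1 addn0 in hS.
have ha := size_aqN y x; have ha' := size_aqN_ge (nc y x).
have hc : cnt j y = 0 by have := cnt_le j y; rewrite d0 muln0 leqn0 => /eqP.
rewrite hc addn0 in ha.
have hb := psiB_N_static x (nc y).
have hF : (0 < Sin j y) -> 0 < #|Fset j y|.
  rewrite /Sin; case: (boolP [exists z, 0 < aL j z y]) => [/existsP [z hz] _|/existsPn hn].
    apply/card_gt0P; exists z; rewrite inE aofM_some.
    by apply: leq_trans hz (size_aqN_ge (nc z y)).
  by rewrite big1 // => z _; apply/eqP; rewrite -leqn0 leqNgt hn.
have := Psi_core y x; rewrite /Psi.
move: hF; rewrite hb.
case: (posnP (aL j y x)) => [a0|apos]; case: (posnP (psiB (S j y) x)) => [b0|bpos];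
  case: (posnP (Sin j y)) => [s0|spos]; try lia.
all: move=> hF; have := hF isT; try lia.
Qed.

Lemma Phi_change : Phi j.+1 <= Phi j + 8 * delta j.+1.
Proof.
apply/bigmax_leqP => p _; apply: leq_trans (Psi_change p.1 p.2) _.
rewrite leq_add2r; exact: (leq_bigmax (F := fun p : V * V => Psi j p.1 p.2) p).
Qed.

Lemma Phi_static : delta j.+1 = 0 -> Phi j.+1 + (0 < Phi j) <= Phi j.
Proof.
move=> d0.
have h : Phi j.+1 <= Phi j - 1.
  apply/bigmax_leqP => p _.
  have h1 := Psi_static p.1 p.2 d0.
  have h2 := leq_bigmax (F := fun p : V * V => Psi j p.1 p.2) p.
  rewrite /Phi; move: h1 h2 => /=; lia.
move: h; case: (posnP (Phi j)) => [->|]; lia.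
Qed.

End Amort.


Lemma Phi0 : Phi 0 = 0.
Proof.
apply/eqP; rewrite -leqn0; apply/bigmax_leqP => p _.
rewrite /Psi /aL /Sin /psiB /=.
rewrite big1 // /dset /= inE.
by rewrite psi3_00 cards0.
Qed.

Lemma pos_psiB (s : nst n) x : (pp s x != set0) || (dset s x != tt s x) -> 0 < psiB s x.
Proof.
rewrite /psiB /psi3; case: (eqVneq (pp s x) set0) => [eP|nP] /=; last first.
  by move=> _; rewrite -!addnA ltn_addr // card_gt0.
move=> nD; rewrite eP cards0 teff0 add0n.
case: (posnP #|dset s x :\: tt s x|) => [d1|]; last by move=> h; rewrite ltn_addr.
case: (posnP #|tt s x :\: dset s x|) => [d2|]; last by move=> h; rewrite ltn_addl.
move/eqP: d1; move/eqP: d2; rewrite !cards_eq0 !setD_eq0 => s2 s1.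
by move: nD; rewrite eqEsubset s1 s2.
Qed.

Lemma inc_bound k j : round_inconsistent Alg k G j.+1 -> (0 < delta j.+1) || (0 < Phi j.+1).
Proof.
case/existsP => v /existsP [H /andP [_ hi]].
move: hi; rewrite respE /query; case: ifP => hin; last by case: (certified _ _ _).
move=> _; move: hin; rewrite /incons S_chg N_chg.
case/orP => [/existsP [u cu]|/existsP [x /andP [xN h]]].
  apply/orP; left; have := cnt_le j v; rewrite /cnt.
  have : 0 < #|[set u | chd j v u]| by apply/card_gt0P; exists u; rewrite inE.
  lia.
apply/orP; right.
apply: leq_trans _ (leq_bigmax (F := fun p : V * V => Psi j.+1 p.1 p.2) (v, x)).
rewrite /Psi /=.
case/orP: h => [/orP [ha|hb]|hb].
- by rewrite /aL -!addnA ltn_addr //; move: ha; case: (aq _ _).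
- have := @pos_psiB (S j.+1 v) x; rewrite hb => /(_ isT); lia.
- have := @pos_psiB (S j.+1 v) x; rewrite hb orbT => /(_ isT); lia.
Qed.

Lemma amort k i : \sum_(1 <= j < i.+1) round_inconsistent Alg k G j + Phi i <= 9 * \sum_(1 <= j < i.+1) delta j.
Proof.
elim: i => [|i IH]; first by rewrite !big_geq // Phi0.
rewrite big_nat_recr //= [X in _ <= 9 * X]big_nat_recr //=.
have hb := @inc_bound k i.
case: (posnP (delta i.+1)) => [d0|dpos].
  have hs := Phi_static d0.
  rewrite d0 in hb *; move: hb; case: (round_inconsistent Alg k G i.+1) => /= hb; last lia.
  have := hb isT; lia.
have hc := Phi_change i.
case: (round_inconsistent Alg k G i.+1) => /=; lia.
Qed.

End Inv.

Lemma listing_all k : k = 4 \/ k = 5 -> listing_correct k Alg.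
Proof.
move=> hk n G [hsym [hirr h0]] i H sH uH.
case: hk => ek; rewrite ek in sH *.
- exact: (listing4 hsym h0 i sH uH).
- exact: (listing5 hsym h0 i sH uH).
Qed.

Lemma amort_all k : amortized_le Alg k 9.
Proof.
move=> n G [hsym [hirr h0]] i.
have := amort hsym hirr h0 k i.
rewrite /delta; lia.
Qed.

Theorem theorem4 : kcycle_listing_O1 4 /\ kcycle_listing_O1 5.
Proof.
split; exists Alg; split.
- exact: small_Alg.
- apply: listing_all; by left.
- by exists 9; apply: amort_all.
- exact: small_Alg.
- apply: listing_all; by right.
- by exists 9; apply: amort_all.
Qed.
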